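(* Let $p\in\mathbb{R}$ and $h_p(x)=(1-x)^pK(x)$ on $(0,1)$. Then $h_p$ is strictly convex on $(0,1)$ if and only if $p\le 0$ or $p\ge \frac{3(2+\sqrt2)}{8}$, and $h_p$ is strictly concave on $(0,1)$ if and only if $p\in\big[\frac{3(2-\sqrt2)}{8},1\big]$.
   Context: $K(x)={\cal K}(\sqrt x)=\frac\pi2\,{}_2F_1(1/2,1/2;1;x)$ for $x\in[0,1)$, where ${\cal K}(r)=\int_0^{\pi/2}(1-r^2\sin^2t)^{-1/2}dt$ is the complete elliptic integral of the first kind. *)

(* Defs.v *)
From Stdlib Require Import Reals Lra.
From Coquelicot Require Import Coquelicot.
Open Scope R_scope.

Definition ellipticK (r : R) : R :=
  RInt (fun t => / sqrt (1 - r ^ 2 * (sin t) ^ 2)) 0 (PI / 2).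

Definition Kx (x : R) : R := ellipticK (sqrt x).

Definition h (p x : R) : R := Rpower (1 - x) p * Kx x.

Definition strictly_convex_on (f : R -> R) (a b : R) : Prop :=
  forall x y t, a < x < b -> a < y < b -> x <> y -> 0 < t < 1 ->
    f (t * x + (1 - t) * y) < t * f x + (1 - t) * f y.

Definition strictly_concave_on (f : R -> R) (a b : R) : Prop :=
  forall x y t, a < x < b -> a < y < b -> x <> y -> 0 < t < 1 ->
    t * f x + (1 - t) * f y < f (t * x + (1 - t) * y).

(* Main.v *)
Require Import Defs.
From Stdlib Require Import Reals Lra Psatz.
From Coquelicot Require Import Coquelicot.
Open Scope R_scope.

Ltac fixD x t := try replace (1 + - (x * (sin t * (sin t * 1)))) with (1 - x * sin t ^ 2) by ring.

Definition Ssin (t : R) : R := sin t ^ 2.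
Definition Dd (x t : R) : R := 1 - x * sin t ^ 2.
Definition W (x t : R) : R := / sqrt (1 - x * sin t ^ 2).

Lemma S_bounds t : 0 <= Ssin t <= 1.
Proof. unfold Ssin. pose proof (sin2_cos2 t). unfold Rsqr in H. pose proof (pow2_ge_0 (cos t)). pose proof (pow2_ge_0 (sin t)). simpl in *. lra. Qed.

Lemma D_pos x t : x < 1 -> 0 < 1 - x * sin t ^ 2.
Proof. intros H. pose proof (S_bounds t) as [H1 H2]. unfold Ssin in *.
  destruct (Rle_dec x 0). nra. nra. Qed.

Lemma sqrtD_pos x t : x < 1 -> 0 < sqrt (1 - x * sin t ^ 2).
Proof. intros H. apply sqrt_lt_R0. now apply D_pos. Qed.

Lemma W_pos x t : x < 1 -> 0 < W x t.
Proof. intros H. unfold W. apply Rinv_0_lt_compat. now apply sqrtD_pos. Qed.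

Lemma W_sq x t : x < 1 -> W x t ^ 2 * (1 - x * sin t ^ 2) = 1.
Proof. intros H. unfold W. pose proof (sqrtD_pos x t H).
  pose proof (sqrt_sqrt (1 - x * sin t ^ 2) (Rlt_le _ _ (D_pos x t H))).
  rewrite <- H1 at 2. field. lra. Qed.

Lemma dW_x x t : x < 1 -> is_derive (fun u => W u t) x (Ssin t * W x t ^ 3 / 2).
Proof. intros H. pose proof (sqrtD_pos x t H). pose proof (D_pos x t H).
  unfold W, Ssin. auto_derive; fixD x t.
  - repeat split; lra.
  - field. lra.
Qed.

Lemma dW3_x x t : x < 1 -> is_derive (fun u => Ssin t * W u t ^ 3 / 2) x (3/4 * Ssin t ^ 2 * W x t ^ 5).
Proof. intros H. pose proof (sqrtD_pos x t H). pose proof (D_pos x t H).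
  unfold W, Ssin. auto_derive; fixD x t.
  - repeat split; lra.
  - field. lra.
Qed.

Lemma cont2_pow f x y n : continuity_2d_pt f x y -> continuity_2d_pt (fun u v => f u v ^ n) x y.
Proof. intros Hf. induction n.
  - apply continuity_2d_pt_ext with (fun _ _ => 1). intros; simpl; ring. apply continuity_2d_pt_const.
  - apply continuity_2d_pt_ext with (fun u v => f u v * f u v ^ n). intros; simpl; ring.
    now apply continuity_2d_pt_mult.
Qed.

Lemma cont2_sin x y : continuity_2d_pt (fun _ v => sin v) x y.
Proof. apply continuity_1d_2d_pt_comp with (f := sin) (g := fun _ v => v).
  apply continuity_sin. apply continuity_2d_pt_id2. Qed.

Lemma cont2_W x y : x < 1 -> continuity_2d_pt W x y.
Proof. intros H. unfold W. apply continuity_2d_pt_inv.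
  2: { apply Rgt_not_eq, sqrtD_pos, H. }
  apply continuity_1d_2d_pt_comp with (f := sqrt) (g := fun u v => 1 - u * sin v ^ 2).
  apply continuity_pt_sqrt. apply Rlt_le, D_pos, H.
  apply continuity_2d_pt_minus. apply continuity_2d_pt_const.
  apply continuity_2d_pt_mult. apply continuity_2d_pt_id1.
  apply cont2_pow, cont2_sin.
Qed.

Lemma cont2_S x y : continuity_2d_pt (fun _ v => Ssin v) x y.
Proof. unfold Ssin. apply cont2_pow, cont2_sin. Qed.

Lemma PI2_pos : 0 < PI / 2.
Proof. pose proof PI_RGT_0. lra. Qed.

Lemma param_deriv (f df : R -> R -> R) x : x < 1 ->
 (forall u t, u < 1 -> is_derive (fun z => f z t) u (df u t)) ->
 (forall u t, u < 1 -> continuity_2d_pt df u t) ->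
 (forall u t, u < 1 -> continuous (f u) t) ->
 is_derive (fun u => RInt (f u) 0 (PI/2)) x (RInt (df x) 0 (PI/2)).
Proof.
  intros Hx Hd Hc Hf.
  assert (Hl : locally x (fun u => u < 1)) by exact (open_lt 1 x Hx).
  assert (E : RInt (df x) 0 (PI/2) = RInt (fun t => Derive (fun u => f u t) x) 0 (PI/2)).
  { apply RInt_ext. intros t _. symmetry. apply is_derive_unique. now apply Hd. }
  rewrite E.
  apply (is_derive_RInt_param f 0 (PI/2) x).
  - apply filter_imp with (2 := Hl). intros u Hu t _. eexists. now apply Hd.
  - intros t _. apply continuity_2d_pt_ext_loc with df.
    + assert (Hd0 : 0 < (1 - x) / 2) by lra.
      exists (mkposreal _ Hd0). intros u v Hu _. simpl in Hu.
      assert (u < 1). { apply Rabs_def2 in Hu. lra. }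
      symmetry. apply is_derive_unique. now apply Hd.
    + now apply Hc.
  - apply filter_imp with (2 := Hl). intros u Hu. apply (@ex_RInt_continuous R_CompleteNormedModule).
    intros z _. now apply Hf.
Qed.

Definition Kf (x : R) : R := RInt (W x) 0 (PI/2).
Definition g1 (x t : R) : R := Ssin t * W x t ^ 3 / 2.
Definition g2 (x t : R) : R := 3/4 * Ssin t ^ 2 * W x t ^ 5.
Definition K1 (x : R) : R := RInt (g1 x) 0 (PI/2).
Definition K2 (x : R) : R := RInt (g2 x) 0 (PI/2).

Lemma W_cont x t : x < 1 -> continuous (W x) t.
Proof. intros H. apply (@ex_derive_continuous R_AbsRing R_NormedModule). pose proof (sqrtD_pos x t H). pose proof (D_pos x t H).
  unfold W. auto_derive. fixD x t. repeat split; lra. Qed.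
Lemma g1_cont x t : x < 1 -> continuous (g1 x) t.
Proof. intros H. apply (@ex_derive_continuous R_AbsRing R_NormedModule). pose proof (sqrtD_pos x t H). pose proof (D_pos x t H).
  unfold g1, W, Ssin. auto_derive. fixD x t. repeat split; lra. Qed.
Lemma g2_cont x t : x < 1 -> continuous (g2 x) t.
Proof. intros H. apply (@ex_derive_continuous R_AbsRing R_NormedModule). pose proof (sqrtD_pos x t H). pose proof (D_pos x t H).
  unfold g2, W, Ssin. auto_derive. fixD x t. repeat split; lra. Qed.

Lemma g1_c2 x t : x < 1 -> continuity_2d_pt g1 x t.
Proof. intros H. unfold g1.
  apply continuity_2d_pt_ext with (fun u v => Ssin v * W u v ^ 3 * / 2). intros; unfold Rdiv; ring.
  apply continuity_2d_pt_mult. apply continuity_2d_pt_mult. apply cont2_S. apply cont2_pow, cont2_W, H.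
  apply continuity_2d_pt_const. Qed.
Lemma g2_c2 x t : x < 1 -> continuity_2d_pt g2 x t.
Proof. intros H. unfold g2.
  apply continuity_2d_pt_mult. apply continuity_2d_pt_mult. apply continuity_2d_pt_const.
  apply cont2_pow, cont2_S. apply cont2_pow, cont2_W, H. Qed.

Lemma Kf_deriv x : x < 1 -> is_derive Kf x (K1 x).
Proof. intros H. unfold Kf, K1. apply param_deriv with (f := W) (df := g1); auto.
  - intros. apply dW_x; auto.
  - intros. apply g1_c2; auto.
  - intros. apply W_cont; auto. Qed.

Lemma K1_deriv x : x < 1 -> is_derive K1 x (K2 x).
Proof. intros H. unfold K2, K1. apply param_deriv with (f := g1) (df := g2); auto.
  - intros. apply dW3_x; auto.
  - intros. apply g2_c2; auto.
  - intros. apply g1_cont; auto. Qed.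

Lemma mvt_open (f f1 : R -> R) a b u v : (forall x, a < x < b -> is_derive f x (f1 x)) ->
  a < u -> u < v -> v < b -> exists c, u < c < v /\ f v - f u = f1 c * (v - u).
Proof. intros Hd Hu Huv Hv.
  destruct (MVT_cor2 f f1 u v Huv) as [c [Hc1 Hc2]].
  - intros c Hc. apply is_derive_Reals. apply Hd. lra.
  - exists c. split; auto.
Qed.

Lemma convex_of_f2 (f f1 f2 : R -> R) a b :
  (forall x, a < x < b -> is_derive f x (f1 x)) ->
  (forall x, a < x < b -> is_derive f1 x (f2 x)) ->
  (forall x, a < x < b -> 0 < f2 x) -> strictly_convex_on f a b.
Proof.
  intros Hd1 Hd2 Hp.
  assert (Hinc : forall u v, a < u -> u < v -> v < b -> f1 u < f1 v).
  { intros u v Hu Huv Hv. destruct (mvt_open f1 f2 a b u v Hd2 Hu Huv Hv) as [c [Hc E]].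
    assert (0 < f2 c) by (apply Hp; lra). nra. }
  assert (Hmain : forall x y t, a < x < b -> a < y < b -> x < y -> 0 < t < 1 ->
     f (t * x + (1 - t) * y) < t * f x + (1 - t) * f y).
  { intros x y t Hx Hy Hxy Ht. set (z := t * x + (1 - t) * y).
    assert (x < z) by (unfold z; nra). assert (z < y) by (unfold z; nra).
    destruct (mvt_open f f1 a b x z Hd1) as [c1 [Hc1 E1]]; try lra.
    destruct (mvt_open f f1 a b z y Hd1) as [c2 [Hc2 E2]]; try lra.
    assert (f1 c1 < f1 c2) by (apply Hinc; lra).
    assert (Ez1 : z - x = (1 - t) * (y - x)) by (unfold z; ring).
    assert (Ez2 : y - z = t * (y - x)) by (unfold z; ring).
    rewrite Ez1 in E1. rewrite Ez2 in E2.
    assert (0 < t * (1 - t) * (y - x) * (f1 c2 - f1 c1)).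
    { apply Rmult_lt_0_compat. apply Rmult_lt_0_compat. apply Rmult_lt_0_compat. lra. lra. lra. lra. }
    nra. }
  intros x y t Hx Hy Hxy Ht. destruct (Rlt_or_le x y) as [H|H].
  - now apply Hmain.
  - assert (y < x) by lra.
    replace (t * x + (1 - t) * y) with ((1 - t) * y + (1 - (1 - t)) * x) by ring.
    replace (t * f x + (1 - t) * f y) with ((1 - t) * f y + (1 - (1 - t)) * f x) by ring.
    apply Hmain; auto; lra.
Qed.

Lemma concave_of_f2 (f f1 f2 : R -> R) a b :
  (forall x, a < x < b -> is_derive f x (f1 x)) ->
  (forall x, a < x < b -> is_derive f1 x (f2 x)) ->
  (forall x, a < x < b -> f2 x < 0) -> strictly_concave_on f a b.
Proof.
  intros Hd1 Hd2 Hn.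
  assert (H := convex_of_f2 (fun x => - f x) (fun x => - f1 x) (fun x => - f2 x) a b).
  intros x y t Hx Hy Hxy Ht.
  assert (strictly_convex_on (fun x => - f x) a b).
  { apply H.
    - intros z Hz. apply (@is_derive_opp R_AbsRing R_NormedModule). auto.
    - intros z Hz. apply (@is_derive_opp R_AbsRing R_NormedModule). auto.
    - intros z Hz. specialize (Hn z Hz). lra. }
  specialize (H0 x y t Hx Hy Hxy Ht). simpl in H0. lra.
Qed.

Lemma Rpower_m1 a p : 0 < a -> Rpower a (p - 1) = Rpower a p / a.
Proof. intros Ha. unfold Rpower.
  replace ((p - 1) * ln a) with (p * ln a + - ln a) by ring.
  rewrite exp_plus, exp_Ropp, exp_ln; auto. Qed.

Lemma Rpower_pos a p : 0 < Rpower a p.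
Proof. unfold Rpower. apply exp_pos. Qed.

Lemma dRpow p x : x < 1 -> is_derive (fun u => Rpower (1 - u) p) x (- p * Rpower (1 - x) (p - 1)).
Proof. intros H. rewrite Rpower_m1 by lra. unfold Rpower. auto_derive.
  - lra.
  - replace (1 + - x) with (1 - x) by ring. field. lra.
Qed.

Definition hh (p x : R) : R := Rpower (1 - x) p * Kf x.
Definition hh1 (p x : R) : R := - p * Rpower (1 - x) (p - 1) * Kf x + Rpower (1 - x) p * K1 x.
Definition hh2 (p x : R) : R :=
  p * (p - 1) * Rpower (1 - x) (p - 2) * Kf x - p * Rpower (1 - x) (p - 1) * K1 x
  - p * Rpower (1 - x) (p - 1) * K1 x + Rpower (1 - x) p * K2 x.

Lemma is_derive_eq (f : R -> R) x l1 l2 : is_derive f x l1 -> l1 = l2 -> is_derive f x l2.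
Proof. intros H ->. exact H. Qed.

Lemma hh_deriv p x : x < 1 -> is_derive (hh p) x (hh1 p x).
Proof. intros H. unfold hh, hh1.
  eapply is_derive_eq.
  apply (@is_derive_mult R_AbsRing). apply dRpow; auto. apply Kf_deriv; auto.
  intros; apply Rmult_comm.
  unfold plus, mult; simpl. ring.
Qed.

Lemma hh1_deriv p x : x < 1 -> is_derive (hh1 p) x (hh2 p x).
Proof. intros H. unfold hh1, hh2.
  eapply is_derive_eq.
  apply (@is_derive_plus R_AbsRing).
  apply (is_derive_ext (fun u => - p * (Rpower (1 - u) (p - 1) * Kf u))). intros t; rewrite Rmult_assoc; reflexivity.
  apply is_derive_scal.
  apply (@is_derive_mult R_AbsRing). apply dRpow; auto. apply Kf_deriv; auto. intros; apply Rmult_comm.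
  apply (@is_derive_mult R_AbsRing). apply dRpow; auto. apply K1_deriv; auto. intros; apply Rmult_comm.
  replace (p - 1 - 1) with (p - 2) by ring. unfold plus, mult; simpl. ring.
Qed.

Definition qint (p x t : R) : R :=
  (p*p - p) * W x t - p * (1 - x) * Ssin t * W x t ^ 3 + 3/4 * (1 - x)^2 * Ssin t ^ 2 * W x t ^ 5.
Definition rr (x t : R) : R := (1 - x) * Ssin t * W x t ^ 2.
Definition Ef (p r : R) : R := (p*p - p) + (p*p - p - p + 3/8) * r + 3/16 * r ^ 2.
Definition Dv (p : R) : R := 2*p*p - 3*p + 9/16.
Definition Bint (p x t : R) : R := W x t * Ssin t * ((1 - x) * Dv p + x * Ef p (rr x t)).
Definition M (p x : R) : R := RInt (qint p x) 0 (PI/2).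

Lemma W_c x t : x < 1 -> continuous (W x) t.
Proof. apply W_cont. Qed.

Lemma exRInt_of_cont (f : R -> R) : (forall t, continuous f t) -> ex_RInt f 0 (PI/2).
Proof. intros H. apply (@ex_RInt_continuous R_CompleteNormedModule). intros; apply H. Qed.

Lemma RInt_lin3 (f g k : R -> R) a b c : ex_RInt f 0 (PI/2) -> ex_RInt g 0 (PI/2) -> ex_RInt k 0 (PI/2) ->
  RInt (fun t => a * f t + b * g t + c * k t) 0 (PI/2) =
  a * RInt f 0 (PI/2) + b * RInt g 0 (PI/2) + c * RInt k 0 (PI/2).
Proof. intros Hf Hg Hk. apply is_RInt_unique.
  apply (@is_RInt_plus R_NormedModule). apply (@is_RInt_plus R_NormedModule).
  apply (@is_RInt_scal R_NormedModule). now apply (@RInt_correct R_CompleteNormedModule).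
  apply (@is_RInt_scal R_NormedModule). now apply (@RInt_correct R_CompleteNormedModule).
  apply (@is_RInt_scal R_NormedModule). now apply (@RInt_correct R_CompleteNormedModule).
Qed.

Lemma M_eq p x : x < 1 -> M p x = (p*p - p) * Kf x + (- 2 * p * (1 - x)) * K1 x + (1 - x)^2 * K2 x.
Proof. intros H. unfold M, Kf, K1, K2. rewrite <- RInt_lin3.
  - apply RInt_ext. intros t _. unfold qint, g1, g2. simpl. field.
  - apply exRInt_of_cont. intros; apply W_cont; auto.
  - apply exRInt_of_cont. intros; apply g1_cont; auto.
  - apply exRInt_of_cont. intros; apply g2_cont; auto.
Qed.

Lemma hh2_M p x : x < 1 -> hh2 p x = Rpower (1 - x) (p - 2) * M p x.
Proof. intros H. rewrite M_eq by auto. unfold hh2.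
  assert (E1 : Rpower (1 - x) (p - 1) = Rpower (1 - x) (p - 2) * (1 - x)).
  { replace (p - 2) with ((p - 1) - 1) by ring. rewrite (Rpower_m1 (1 - x) (p - 1)) by lra. field. lra. }
  assert (E2 : Rpower (1 - x) p = Rpower (1 - x) (p - 1) * (1 - x)).
  { rewrite (Rpower_m1 (1 - x) p) by lra. field. lra. }
  rewrite E2, E1. ring.
Qed.

Lemma dW_t x t : x < 1 -> is_derive (W x) t (x * sin t * cos t * W x t ^ 3).
Proof. intros H. pose proof (sqrtD_pos x t H). pose proof (D_pos x t H).
  unfold W. auto_derive; fixD x t.
  - repeat split; lra.
  - field. lra.
Qed.

Definition phi (p x t : R) : R :=
  sin t * cos t * W x t * (-(p*p-p) + 3/16*(1-x) * (sin t * sin t) * (W x t * W x t)).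

Definition dphi (p x t : R) : R :=
  let sn := sin t in let cs := cos t in let w := W x t in
  let R0 := -(p*p-p) + 3/16*(1-x) * (sn * sn) * (w * w) in
  (cs*cs - sn*sn) * w * R0 + x * (sn*sn) * (cs*cs) * w * (w*w) * R0
  + 2*(3/16*(1-x))*(sn*sn)*(cs*cs)*w*(w*w)*(1 + x*(sn*sn)*(w*w)).

Lemma phi_deriv p x t : x < 1 -> is_derive (phi p x) t (dphi p x t).
Proof. intros H. unfold phi, dphi.
  assert (Hd : forall t, is_derive (W x) t (x * sin t * cos t * W x t ^ 3)) by (intros; apply dW_t; auto).
  auto_derive.
  - split. eexists; apply Hd. split. eexists; apply Hd. split. eexists; apply Hd. auto.
  - assert (E0 : Derive (fun x0 => W x x0) t = x * sin t * cos t * W x t ^ 3) by (apply is_derive_unique; apply Hd). rewrite E0. ring.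
Qed.

Lemma alg_id sn cs w x p : 0 < 1 - x * sn ^ 2 -> cs * cs = 1 - sn * sn -> w * w = / (1 - x * sn ^ 2) ->
  let R0 := -(p*p-p) + 3/16*(1-x) * (sn * sn) * (w * w) in
  (cs*cs - sn*sn) * w * R0 + x * (sn*sn) * (cs*cs) * w * (w*w) * R0
  + 2*(3/16*(1-x))*(sn*sn)*(cs*cs)*w*(w*w)*(1 + x*(sn*sn)*(w*w))
  = w * sn ^ 2 * ((1 - x) * Dv p + x * Ef p ((1 - x) * sn ^ 2 * w ^ 2))
    - ((p*p - p) * w - p * (1 - x) * sn ^ 2 * w ^ 3 + 3/4 * (1 - x)^2 * (sn ^ 2) ^ 2 * w ^ 5).
Proof. intros HD Hc Hw R0. unfold R0, Ef, Dv.
  replace (w ^ 2) with (w * w) by ring.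
  replace (w ^ 3) with (w * (w * w)) by ring.
  replace (w ^ 5) with (w * (w * w) * (w * w)) by ring.
  rewrite Hc, Hw. field. lra.
Qed.

Lemma dphi_eq p x t : x < 1 -> dphi p x t = Bint p x t - qint p x t.
Proof. intros H. unfold dphi, Bint, qint, rr, Ssin.
  apply alg_id. apply D_pos; auto.
  pose proof (sin2_cos2 t). unfold Rsqr in H0. lra.
  pose proof (W_sq x t H). replace (W x t * W x t) with (W x t ^ 2) by ring.
  pose proof (D_pos x t H). field_simplify_eq. lra. lra.
Qed.

Lemma exW x t : x < 1 -> ex_derive (W x) t.
Proof. intros H. eexists. apply dW_t. auto. Qed.

Ltac solve_exd x := auto_derive; repeat split; auto; try (apply exW; auto).

Lemma qint_cont p x t : x < 1 -> continuous (qint p x) t.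
Proof. intros H. apply (@ex_derive_continuous R_AbsRing R_NormedModule).
  unfold qint, Ssin. pose proof (exW x t H). solve_exd x. Qed.

Lemma Bint_cont p x t : x < 1 -> continuous (Bint p x) t.
Proof. intros H. apply (@ex_derive_continuous R_AbsRing R_NormedModule).
  unfold Bint, Ef, rr, Ssin. pose proof (exW x t H). solve_exd x. Qed.

Lemma dphi_cont p x t : x < 1 -> continuous (dphi p x) t.
Proof. intros H. apply (@ex_derive_continuous R_AbsRing R_NormedModule).
  unfold dphi. pose proof (exW x t H). solve_exd x. Qed.

Lemma M_Bint p x : x < 1 -> M p x = RInt (Bint p x) 0 (PI/2).
Proof. intros H.
  assert (HI : is_RInt (dphi p x) 0 (PI/2) (minus (phi p x (PI/2)) (phi p x 0))).
  { apply (@is_RInt_derive R_CompleteNormedModule).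
    - intros; apply phi_deriv; auto.
    - intros; apply dphi_cont; auto. }
  assert (E0 : minus (phi p x (PI/2)) (phi p x 0) = 0).
  { unfold phi. rewrite cos_PI2, sin_0. unfold minus, plus, opp; simpl. ring. }
  rewrite E0 in HI.
  assert (E1 : RInt (fun t => Bint p x t - qint p x t) 0 (PI/2) = 0).
  { transitivity (RInt (dphi p x) 0 (PI/2)).
    apply RInt_ext. intros; simpl. symmetry. apply dphi_eq; auto.
    apply is_RInt_unique; exact HI. }
  rewrite (RInt_minus (V := R_CompleteNormedModule)) in E1.
  - unfold M. unfold minus, plus, opp in E1; simpl in E1. lra.
  - apply exRInt_of_cont. intros; apply Bint_cont; auto.
  - apply exRInt_of_cont. intros; apply qint_cont; auto.
Qed.

Lemma t_facts t : 0 < t < PI/2 -> 0 < sin t /\ sin t < 1 /\ 0 < cos t.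
Proof. intros Ht. pose proof PI_RGT_0.
  assert (0 < sin t) by (apply sin_gt_0; lra).
  assert (0 < cos t) by (apply cos_gt_0; lra).
  pose proof (sin2_cos2 t). unfold Rsqr in *. repeat split; nra. Qed.

Lemma rr_bounds x t : x < 1 -> 0 < t < PI/2 -> 0 <= rr x t < 1.
Proof. intros H Ht. destruct (t_facts t Ht) as [H1 [H2 H3]].
  pose proof (W_sq x t H). pose proof (D_pos x t H). unfold rr, Ssin.
  assert (0 < W x t ^ 2) by (pose proof (W_pos x t H); nra).
  split. assert (0 < sin t ^ 2) by nra. nra.
  assert (sin t ^ 2 < 1) by nra.
  (* (1-x) Ssin W^2 < 1 <=> (1-x) Ssin < 1 - x Ssin *)
  nra.
Qed.

Lemma M_pos_of p x : x < 1 -> (forall r, 0 <= r < 1 -> 0 < (1 - x) * Dv p + x * Ef p r) -> 0 < M p x.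
Proof. intros H Hb. rewrite M_Bint by auto. apply RInt_gt_0.
  - apply PI2_pos.
  - intros t Ht. destruct (t_facts t Ht) as [H1 [H2 H3]]. unfold Bint.
    pose proof (W_pos x t H). assert (0 < Ssin t) by (unfold Ssin; nra).
    pose proof (Hb _ (rr_bounds x t H Ht)).
    apply Rmult_lt_0_compat; auto. apply Rmult_lt_0_compat; auto.
  - intros; apply Bint_cont; auto.
Qed.

Lemma M_neg_of p x : x < 1 -> (forall r, 0 <= r < 1 -> (1 - x) * Dv p + x * Ef p r < 0) -> M p x < 0.
Proof. intros H Hb. rewrite M_Bint by auto.
  assert (0 < RInt (fun t => - Bint p x t) 0 (PI/2)).
  { apply RInt_gt_0.
  - apply PI2_pos.
  - intros t Ht. destruct (t_facts t Ht) as [H1 [H2 H3]]. unfold Bint.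
    pose proof (W_pos x t H). assert (0 < Ssin t) by (unfold Ssin; nra).
    pose proof (Hb _ (rr_bounds x t H Ht)).
    assert (0 < W x t * Ssin t) by (apply Rmult_lt_0_compat; auto). nra.
  - intros. apply (@continuous_opp R_UniformSpace R_AbsRing R_NormedModule (Bint p x)). apply Bint_cont; auto. }
  rewrite (RInt_opp (V := R_CompleteNormedModule)) in H0. unfold opp in H0; simpl in H0. lra.
  apply exRInt_of_cont. intros; apply Bint_cont; auto.
Qed.

Lemma h2_pos p x : x < 1 -> 0 < M p x -> 0 < hh2 p x.
Proof. intros H1 H2. rewrite hh2_M by auto. apply Rmult_lt_0_compat; auto. apply Rpower_pos. Qed.
Lemma h2_neg p x : x < 1 -> M p x < 0 -> hh2 p x < 0.
Proof. intros H1 H2. rewrite hh2_M by auto. pose proof (Rpower_pos (1 - x) (p - 2)). nra. Qed.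

Definition cp := 3 * (2 + sqrt 2) / 8.
Definition cm := 3 * (2 - sqrt 2) / 8.

Lemma sqrt2_facts : sqrt 2 * sqrt 2 = 2 /\ 141/100 < sqrt 2 < 142/100.
Proof. pose proof (sqrt_sqrt 2 ltac:(lra)). pose proof (sqrt_pos 2). split; auto. split; nra. Qed.

Lemma Dv_fact p : Dv p = 2 * (p - cm) * (p - cp).
Proof. destruct sqrt2_facts as [H _]. unfold Dv, cm, cp. nra. Qed.

Lemma cpm : 127/100 < cp < 129/100 /\ 21/100 < cm < 23/100.
Proof. destruct sqrt2_facts as [_ H]. unfold cp, cm. split; split; lra. Qed.

Lemma Ef_conv p r : Ef p r = (1 - r) * (p*p - p) + r * Dv p - 3/16 * r * (1 - r).
Proof. unfold Ef, Dv. field. Qed.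

Lemma br_convex p x r : (p <= 0 \/ cp <= p) -> 0 < x < 1 -> 0 <= r < 1 -> 0 < (1 - x) * Dv p + x * Ef p r.
Proof. intros Hp Hx Hr. rewrite Dv_fact. destruct cpm as [H1 H2].
  destruct Hp as [Hp|Hp].
  - assert (0 < 2 * (p - cm) * (p - cp)) by nra.
    assert (0 <= Ef p r) by (unfold Ef; nra). nra.
  - assert (0 <= 2 * (p - cm) * (p - cp)) by nra.
    assert (0 < Ef p r).
    { destruct (Rle_lt_dec p (3/2)).
      + (* E(r) = E(1) + E'(1)(r-1) + 3/16 (r-1)^2, E(1) = Dv >= 0, E'(1) = (p-1/2)(p-3/2) <= 0 *)
        assert (Ef p r = Dv p + (p - 1/2) * (p - 3/2) * (r - 1) + 3/16 * (r - 1) ^ 2) by (unfold Ef, Dv; field).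
        rewrite H0, Dv_fact.
        assert (0 <= (p - 1/2) * (3/2 - p)) by nra.
        assert (0 <= (p - 1/2) * (3/2 - p) * (1 - r)) by (apply Rmult_le_pos; lra).
        assert (0 < (r - 1) ^ 2) by (replace ((r-1)^2) with ((1-r)*(1-r)) by ring; apply Rmult_lt_0_compat; lra).
        nra.
      + assert (p * (1 + r) - 1 - 2 * r >= (1 - r) / 2) by nra.
        assert (0 < p * (p * (1 + r) - 1 - 2 * r)) by (apply Rmult_lt_0_compat; lra).
        assert (Ef p r = p * (p * (1 + r) - 1 - 2 * r) + 3/8 * r + 3/16 * r^2) by (unfold Ef; field).
        nra. }
    nra.
Qed.

Lemma Rmult_le_0_l_aux a b : 0 <= a -> b <= 0 -> a * b <= 0.
Proof. intros. nra. Qed.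

Lemma br_concave p x r : cm <= p <= 1 -> 0 < x < 1 -> 0 <= r < 1 -> (1 - x) * Dv p + x * Ef p r < 0.
Proof. intros Hp Hx Hr. destruct cpm as [H1 H2]. rewrite Ef_conv.
  assert (HP : p * p - p <= 0) by nra.
  assert (HD : Dv p <= 0) by (rewrite Dv_fact; nra).
  destruct (Req_dec p cm) as [E|E].
  - assert (Dv p = 0) by (rewrite Dv_fact, E; ring).
    assert (p * p - p < 0) by nra. rewrite H.
    assert ((1 - r) * (p * p - p) < 0) by (apply Rmult_pos_neg; lra).
    assert (0 <= r * (1 - r)) by (apply Rmult_le_pos; lra).
    assert (Hn : (1 - r) * (p * p - p) + r * 0 - 3 / 16 * r * (1 - r) < 0) by lra.
    assert (x * ((1 - r) * (p * p - p) + r * 0 - 3 / 16 * r * (1 - r)) < 0) by (apply Rmult_pos_neg; lra).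
    lra.
  - assert (Dv p < 0) by (rewrite Dv_fact; nra).
    assert ((1 - r) * (p * p - p) <= 0) by (apply Rmult_le_0_l_aux; lra).
    assert (r * Dv p <= 0) by nra.
    assert (0 <= r * (1 - r)) by (apply Rmult_le_pos; lra).
    assert (x * ((1 - r) * (p * p - p) + r * Dv p - 3 / 16 * r * (1 - r)) <= 0) by (apply Rmult_le_0_l_aux; lra).
    assert ((1 - x) * Dv p < 0) by (apply Rmult_pos_neg; lra).
    lra.
Qed.

Lemma br_near0_neg p x r : 1 <= p < cp -> 0 < x -> x < - Dv p / (p*p - p - Dv p) -> 0 <= r < 1 ->
  (1 - x) * Dv p + x * Ef p r < 0.
Proof. intros Hp Hx Hx1 Hr. destruct cpm as [H1 H2].
  assert (HD : Dv p < 0) by (rewrite Dv_fact; nra).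
  assert (HP : 0 <= p * p - p) by nra.
  assert (Ef p r <= p * p - p) by (rewrite Ef_conv; nra).
  assert (x * (p*p - p - Dv p) < - Dv p).
  { apply Rmult_lt_compat_r with (r := p*p-p-Dv p) in Hx1; [|lra].
    unfold Rdiv in Hx1. rewrite Rmult_assoc, Rinv_l in Hx1 by lra. lra. }
  nra.
Qed.

Lemma br_near0_pos p x r : 0 < p < cm -> 0 < x -> x < Dv p / (Dv p + (p - 2 * (p*p - p))) -> 0 <= r < 1 ->
  0 < (1 - x) * Dv p + x * Ef p r.
Proof. intros Hp Hx Hx1 Hr. destruct cpm as [H1 H2].
  assert (HD : 0 < Dv p) by (rewrite Dv_fact; nra).
  assert (HP : p * p - p < 0) by nra.
  assert (Ef p r >= 2 * (p*p - p) - p) by (unfold Ef; nra).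
  assert (x * (Dv p + (p - 2 * (p*p - p))) < Dv p).
  { apply Rmult_lt_compat_r with (r := Dv p + (p - 2 * (p*p - p))) in Hx1; [|lra].
    unfold Rdiv in Hx1. rewrite Rmult_assoc, Rinv_l in Hx1 by lra. lra. }
  nra.
Qed.

Lemma RInt_lin2 (f g : R -> R) a b : ex_RInt f 0 (PI/2) -> ex_RInt g 0 (PI/2) ->
  RInt (fun t => a * f t + b * g t) 0 (PI/2) = a * RInt f 0 (PI/2) + b * RInt g 0 (PI/2).
Proof. intros Hf Hg. apply is_RInt_unique.
  apply (@is_RInt_plus R_NormedModule).
  apply (@is_RInt_scal R_NormedModule). now apply (@RInt_correct R_CompleteNormedModule).
  apply (@is_RInt_scal R_NormedModule). now apply (@RInt_correct R_CompleteNormedModule).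
Qed.

Definition jint (x t : R) : R := (1 - x) * Ssin t * W x t ^ 3.
Definition J (x : R) : R := RInt (jint x) 0 (PI/2).

Lemma jint_cont x t : x < 1 -> continuous (jint x) t.
Proof. intros H. apply (@ex_derive_continuous R_AbsRing R_NormedModule).
  unfold jint, Ssin. pose proof (exW x t H). solve_exd x. Qed.

Definition Fj (x t : R) : R := - cos t * W x t.

Lemma J_le1 x : x < 1 -> J x <= 1.
Proof. intros H.
  assert (HI : is_RInt (fun t => (1 - x) * sin t * W x t ^ 3) 0 (PI/2)
                (minus (Fj x (PI/2)) (Fj x 0))).
  { apply (@is_RInt_derive R_CompleteNormedModule (Fj x)). unfold Fj.
    - intros t _. eapply is_derive_eq.
      apply (@is_derive_mult R_AbsRing). auto_derive. auto. reflexivity.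
      apply dW_t; auto. intros; apply Rmult_comm.
      simpl. unfold mult, plus; simpl.
      pose proof (W_sq x t H). pose proof (sin2_cos2 t). unfold Rsqr in H1.
      assert (E1 : W x t = W x t ^ 3 * (1 - x * sin t ^ 2)).
      { replace (W x t ^ 3 * (1 - x * sin t ^ 2)) with (W x t * (W x t ^ 2 * (1 - x * sin t ^ 2))) by ring.
        rewrite H0. ring. }
      rewrite E1 at 1. replace (cos t * cos t) with (1 - sin t * sin t) by lra. ring_simplify.
      replace (cos t ^ 2) with (1 - sin t ^ 2) by (simpl; lra). ring.
    - intros t _. apply (@ex_derive_continuous R_AbsRing R_NormedModule).
      pose proof (exW x t H). solve_exd x. }
  unfold Fj in HI. rewrite cos_PI2, cos_0 in HI. assert (W0 : W x 0 = 1).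
  { unfold W. rewrite sin_0. replace (1 - x * 0 ^ 2) with 1 by ring. rewrite sqrt_1. apply Rinv_1. }
  rewrite W0 in HI.
  match type of HI with is_RInt _ _ _ ?v => replace v with 1 in HI by (unfold minus, plus, opp; simpl; ring) end.
  unfold J. rewrite <- (is_RInt_unique _ _ _ _ HI).
  apply RInt_le.
  - left; apply PI2_pos.
  - apply exRInt_of_cont. intros; apply jint_cont; auto.
  - exists 1. exact HI.
  - intros t Ht. destruct (t_facts t Ht) as [H1 [H2 H3]]. unfold jint, Ssin.
    pose proof (W_pos x t H). assert (0 < W x t ^ 3) by (apply pow_lt; auto).
    assert (sin t ^ 2 <= sin t) by nra.
    assert (0 <= 1 - x) by lra.
    apply Rmult_le_compat_r; [lra|]. apply Rmult_le_compat_l; lra.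
Qed.

Definition Fk (d t : R) : R := - ln (d + cos t).

Lemma Kf_lower x : x < 1 -> - ln (sqrt (1 - x)) <= Kf x.
Proof. intros H. set (d := sqrt (1 - x)).
  assert (Hd : 0 < d) by (apply sqrt_lt_R0; lra).
  assert (Hd2 : d * d = 1 - x) by (apply sqrt_sqrt; lra).
  pose proof PI_RGT_0.
  assert (Hc : forall t, 0 <= t <= PI/2 -> 0 < d + cos t).
  { intros t Ht. assert (0 <= cos t) by (apply cos_ge_0; lra). lra. }
  assert (HI : is_RInt (fun t => sin t / (d + cos t)) 0 (PI/2) (minus (Fk d (PI/2)) (Fk d 0))).
  { apply (@is_RInt_derive R_CompleteNormedModule (Fk d)).
    - intros t Ht. rewrite Rmin_left, Rmax_right in Ht by lra. specialize (Hc t Ht).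
      unfold Fk. auto_derive. lra. field. lra.
    - intros t Ht. rewrite Rmin_left, Rmax_right in Ht by lra. specialize (Hc t Ht).
      apply (@ex_derive_continuous R_AbsRing R_NormedModule). auto_derive. lra. }
  unfold Fk in HI. rewrite cos_PI2, cos_0 in HI.
  match type of HI with is_RInt _ _ _ ?v => replace v with (- ln d + ln (d + 1)) in HI by (unfold minus, plus, opp; simpl; rewrite Rplus_0_r; ring) end.
  assert (0 < ln (d + 1)). { rewrite <- ln_1. apply ln_increasing; lra. }
  apply Rle_trans with (- ln d + ln (d + 1)). lra.
  unfold Kf. rewrite <- (is_RInt_unique _ _ _ _ HI).
  apply RInt_le.
  - left; apply PI2_pos.
  - exists (- ln d + ln (d + 1)). exact HI.
  - apply exRInt_of_cont. intros; apply W_cont; auto.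
  - intros t Ht. destruct (t_facts t Ht) as [Hs1 [Hs2 Hs3]].
    assert (Hc' : 0 < d + cos t) by lra.
    assert (HD : 0 < 1 - x * sin t ^ 2) by (apply D_pos; auto).
    assert (sqrt (1 - x * sin t ^ 2) <= d + cos t).
    { rewrite <- (sqrt_pow2 (d + cos t)) by lra. apply sqrt_le_1_alt.
      pose proof (sin2_cos2 t). unfold Rsqr in *. nra. }
    pose proof (sqrtD_pos x t H). unfold W.
    apply Rle_trans with (/ (d + cos t)).
    + unfold Rdiv. rewrite <- (Rmult_1_l (/ (d + cos t))) at 2. apply Rmult_le_compat_r.
      left; apply Rinv_0_lt_compat; lra. lra.
    + apply Rinv_le_contravar; lra.
Qed.

Lemma M_upper p x : 0 < p -> x < 1 -> M p x <= (p*p - p) * Kf x + 3/4 * J x.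
Proof. intros Hp H. unfold Kf, J. rewrite <- RInt_lin2.
  - apply RInt_le. left; apply PI2_pos.
    apply exRInt_of_cont. intros; apply qint_cont; auto.
    apply exRInt_of_cont. intros t. apply (@ex_derive_continuous R_AbsRing R_NormedModule).
      unfold jint, Ssin. pose proof (exW x t H). solve_exd x.
    intros t Ht. pose proof (rr_bounds x t H Ht) as Hr. pose proof (W_pos x t H).
    assert (Hj : 0 <= jint x t).
    { unfold jint, Ssin. apply Rmult_le_pos. apply Rmult_le_pos. lra. apply pow2_ge_0. apply pow_le; lra. }
    assert (E0 : qint p x t = (p*p - p) * W x t - p * jint x t + 3/4 * rr x t * jint x t).
    { unfold qint, jint, rr. ring. }
    rewrite E0. nra.
  - apply exRInt_of_cont. intros; apply W_cont; auto.
  - apply exRInt_of_cont. intros; apply jint_cont; auto.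
Qed.

Lemma M_lower p x : 0 <= p -> x < 1 -> (p*p - p) * Kf x - p * J x <= M p x.
Proof. intros Hp H. unfold Kf, J.
  replace ((p*p - p) * RInt (W x) 0 (PI / 2) - p * RInt (jint x) 0 (PI / 2))
    with ((p*p - p) * RInt (W x) 0 (PI / 2) + (- p) * RInt (jint x) 0 (PI / 2)) by ring.
  rewrite <- RInt_lin2.
  - apply RInt_le. left; apply PI2_pos.
    apply exRInt_of_cont. intros t. apply (@ex_derive_continuous R_AbsRing R_NormedModule).
      unfold jint, Ssin. pose proof (exW x t H). solve_exd x.
    apply exRInt_of_cont. intros; apply qint_cont; auto.
    intros t Ht. pose proof (rr_bounds x t H Ht) as Hr. pose proof (W_pos x t H).
    assert (Hj : 0 <= jint x t).
    { unfold jint, Ssin. apply Rmult_le_pos. apply Rmult_le_pos. lra. apply pow2_ge_0. apply pow_le; lra. }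
    assert (E0 : qint p x t = (p*p - p) * W x t - p * jint x t + 3/4 * rr x t * jint x t).
    { unfold qint, jint, rr. ring. }
    rewrite E0. nra.
  - apply exRInt_of_cont. intros; apply W_cont; auto.
  - apply exRInt_of_cont. intros; apply jint_cont; auto.
Qed.

Lemma ln_sqrt_half a : 0 < a -> ln (sqrt a) = ln a / 2.
Proof. intros Ha. assert (0 < sqrt a) by (apply sqrt_lt_R0; auto).
  assert (ln (sqrt a * sqrt a) = ln (sqrt a) + ln (sqrt a)) by (apply ln_mult; auto).
  rewrite sqrt_sqrt in H0 by lra. lra. Qed.

Lemma near1 L : 0 < L -> exists x1, 0 < x1 < 1 /\ forall x, x1 < x < 1 -> L < - ln (sqrt (1 - x)).
Proof. intros HL. exists (1 - exp (- 2 * L)).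
  assert (exp (- 2 * L) < 1). { rewrite <- exp_0. apply exp_increasing. lra. }
  pose proof (exp_pos (- 2 * L)). split. lra.
  intros x Hx. rewrite ln_sqrt_half by lra.
  assert (ln (1 - x) < - 2 * L).
  { rewrite <- (ln_exp (- 2 * L)). apply ln_increasing; lra. }
  lra.
Qed.

Lemma near1_neg p : 0 < p < 1 -> exists x1, 0 < x1 < 1 /\ forall x, x1 < x < 1 -> M p x < 0.
Proof. intros Hp. assert (HP : p * p - p < 0) by nra.
  destruct (near1 (3/4 / (-(p*p - p)))) as [x1 [Hx1 Hall]].
  { apply Rdiv_lt_0_compat; lra. }
  exists x1. split; auto. intros x Hx. specialize (Hall x Hx).
  pose proof (M_upper p x (proj1 Hp) (proj2 Hx)). pose proof (J_le1 x (proj2 Hx)).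
  pose proof (Kf_lower x (proj2 Hx)).
  assert (E0 : (p*p - p) * (3/4 / (-(p*p - p))) = - (3/4)) by (field; lra).
  nra.
Qed.

Lemma near1_pos p : 1 < p -> exists x1, 0 < x1 < 1 /\ forall x, x1 < x < 1 -> 0 < M p x.
Proof. intros Hp. assert (HP : 0 < p * p - p) by nra.
  destruct (near1 (p / (p*p - p))) as [x1 [Hx1 Hall]].
  { apply Rdiv_lt_0_compat; lra. }
  exists x1. split; auto. intros x Hx. specialize (Hall x Hx).
  pose proof (M_lower p x ltac:(lra) (proj2 Hx)). pose proof (J_le1 x (proj2 Hx)).
  pose proof (Kf_lower x (proj2 Hx)).
  assert (E0 : (p*p - p) * (p / (p*p - p)) = p) by (field; lra).
  nra.
Qed.

Lemma Kx_eq x : 0 <= x -> Kx x = Kf x.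
Proof. intros H. unfold Kx, ellipticK, Kf. apply RInt_ext. intros t _. unfold W.
  rewrite pow2_sqrt by auto. reflexivity. Qed.

Lemma h_eq p x : 0 <= x -> h p x = hh p x.
Proof. intros H. unfold h, hh. rewrite Kx_eq; auto. Qed.

Lemma convex_transfer f g a b : (forall x, a < x < b -> f x = g x) -> strictly_convex_on f a b -> strictly_convex_on g a b.
Proof. intros E Hc x y t Hx Hy Hxy Ht.
  assert (a < t * x + (1 - t) * y < b) by (split; nra).
  rewrite <- !E by auto. now apply Hc. Qed.

Lemma concave_transfer f g a b : (forall x, a < x < b -> f x = g x) -> strictly_concave_on f a b -> strictly_concave_on g a b.
Proof. intros E Hc x y t Hx Hy Hxy Ht.
  assert (a < t * x + (1 - t) * y < b) by (split; nra).
  rewrite <- !E by auto. now apply Hc. Qed.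

Lemma h_convex_of p a b : 0 <= a -> b <= 1 -> (forall x, a < x < b -> 0 < M p x) -> strictly_convex_on (h p) a b.
Proof. intros Ha Hb HM. apply convex_transfer with (hh p).
  intros; symmetry; apply h_eq; lra.
  apply convex_of_f2 with (hh1 p) (hh2 p).
  - intros; apply hh_deriv; lra.
  - intros; apply hh1_deriv; lra.
  - intros; apply h2_pos. lra. apply HM; auto.
Qed.

Lemma h_concave_of p a b : 0 <= a -> b <= 1 -> (forall x, a < x < b -> M p x < 0) -> strictly_concave_on (h p) a b.
Proof. intros Ha Hb HM. apply concave_transfer with (hh p).
  intros; symmetry; apply h_eq; lra.
  apply concave_of_f2 with (hh1 p) (hh2 p).
  - intros; apply hh_deriv; lra.
  - intros; apply hh1_deriv; lra.
  - intros; apply h2_neg. lra. apply HM; auto.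
Qed.

Lemma both_false f a b c d : a <= c -> c < d -> d <= b -> strictly_convex_on f a b -> strictly_concave_on f c d -> False.
Proof. intros H1 H2 H3 Hv Hc.
  set (x := c + (d - c) / 4). set (y := c + 3 * (d - c) / 4).
  assert (c < x < d) by (unfold x; lra). assert (c < y < d) by (unfold y; lra).
  assert (x <> y) by (unfold x, y; lra).
  specialize (Hv x y (1/2) ltac:(lra) ltac:(lra) H4 ltac:(lra)).
  specialize (Hc x y (1/2) ltac:(lra) ltac:(lra) H4 ltac:(lra)). lra.
Qed.

Lemma near0_neg p : 1 <= p < cp -> exists x1, 0 < x1 <= 1 /\ forall x, 0 < x < x1 -> M p x < 0.
Proof. intros Hp. destruct cpm as [H1 H2].
  assert (HD : Dv p < 0) by (rewrite Dv_fact; nra).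
  assert (HP : 0 <= p * p - p) by nra.
  exists (- Dv p / (p*p - p - Dv p)). split.
  - split. apply Rdiv_lt_0_compat; lra.
    apply Rmult_le_reg_r with (p*p - p - Dv p). lra.
    unfold Rdiv. rewrite Rmult_assoc, Rinv_l by lra. lra.
  - intros x Hx. assert (x < 1).
    { assert (- Dv p / (p*p - p - Dv p) <= 1).
      { apply Rmult_le_reg_r with (p*p - p - Dv p). lra. unfold Rdiv. rewrite Rmult_assoc, Rinv_l by lra. lra. }
      lra. }
    apply M_neg_of. auto. intros r Hr. apply br_near0_neg; lra.
Qed.

Lemma near0_pos p : 0 < p < cm -> exists x1, 0 < x1 <= 1 /\ forall x, 0 < x < x1 -> 0 < M p x.
Proof. intros Hp. destruct cpm as [H1 H2].
  assert (HD : 0 < Dv p) by (rewrite Dv_fact; nra).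
  assert (HP : p * p - p < 0) by nra.
  assert (Hle : Dv p / (Dv p + (p - 2 * (p*p - p))) <= 1).
  { apply Rmult_le_reg_r with (Dv p + (p - 2 * (p*p - p))). lra. unfold Rdiv. rewrite Rmult_assoc, Rinv_l by lra. lra. }
  exists (Dv p / (Dv p + (p - 2 * (p*p - p)))). split.
  - split. apply Rdiv_lt_0_compat; lra. auto.
  - intros x Hx. apply M_pos_of. lra. intros r Hr. apply br_near0_pos; lra.
Qed.

Theorem corollary1 (p : R) :
  (strictly_convex_on (h p) 0 1 <->
     (p <= 0 \/ 3 * (2 + sqrt 2) / 8 <= p)) /\
  (strictly_concave_on (h p) 0 1 <->
     (3 * (2 - sqrt 2) / 8 <= p /\ p <= 1)).
Proof.
  fold cp cm. destruct cpm as [Hcp Hcm].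
  assert (Hconv : p <= 0 \/ cp <= p -> strictly_convex_on (h p) 0 1).
  { intros Hp. apply h_convex_of; try lra. intros x Hx. apply M_pos_of. lra.
    intros r Hr. apply br_convex; auto. }
  split; split.
  - intros Hv. destruct (Rle_or_lt p 0) as [Hp|Hp]. now left.
    destruct (Rle_or_lt cp p) as [Hp2|Hp2]. now right. exfalso.
    destruct (Rlt_or_le p 1) as [Hp1|Hp1].
    + destruct (near1_neg p (conj Hp Hp1)) as [x1 [Hx1 Hall]].
      apply (both_false (h p) 0 1 x1 1); try lra; auto.
      apply h_concave_of; try lra. auto.
    + destruct (near0_neg p (conj Hp1 Hp2)) as [x1 [Hx1 Hall]].
      apply (both_false (h p) 0 1 0 x1); try lra; auto.
      apply h_concave_of; try lra. auto.
  - exact Hconv.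
  - intros Hc. split.
    + destruct (Rle_or_lt cm p) as [Hp|Hp]; auto. exfalso.
      destruct (Rle_or_lt p 0) as [Hp0|Hp0].
      * apply (both_false (h p) 0 1 0 1); try lra; auto.
      * destruct (near0_pos p (conj Hp0 Hp)) as [x1 [Hx1 Hall]].
        apply (both_false (h p) 0 x1 0 x1); try lra; auto.
        apply h_convex_of; try lra. auto.
        intros x y t Hx Hy Hxy Ht. apply Hc; auto; lra.
    + destruct (Rle_or_lt p 1) as [Hp|Hp]; auto. exfalso.
      destruct (near1_pos p Hp) as [x1 [Hx1 Hall]].
      apply (both_false (h p) x1 1 x1 1); try lra; auto.
      apply h_convex_of; try lra. auto.
      intros x y t Hx Hy Hxy Ht. apply Hc; auto; lra.
  - intros Hp. apply h_concave_of; try lra. intros x Hx. apply M_neg_of. lra.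
    intros r Hr. apply br_concave; auto.
Qed.
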